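(* Let $\lambda\in P$, $1\le k\le n-1$, $r\ge2$, $m\ge1$. If $\lambda$ has a neighborhood of type $(m(k+1),m(r-1))$, then $\lambda$ has a neighborhood of type $(k+1,r-1)$. If $d\ge1$ and $\lambda$ has a neighborhood of type $(m(k+1)+d,m(r-1))$, then $\lambda$ has two (distinct) neighborhoods of type $(k+1,r-1)$.
   Context: Let $P=\mathbb Z^n$. For $\lambda\in P$, $\rho(\lambda)$ is the unique permutation of $(\frac{n-1}2,\frac{n-3}2,\dots,-\frac{n-1}2)$ with $\rho(\lambda)_i>\rho(\lambda)_j$ iff $\lambda_i>\lambda_j$ or ($\lambda_i=\lambda_j$ and $i<j$). For integers $a\ge2,b\ge1$, an ordered pair $(i,j)$ is a neighborhood of type $(a,b)$ in $\lambda$ if $\rho(\lambda)_i-\rho(\lambda)_j=a-1$ and either $\lambda_i-\lambda_j\le b-1$, or $\lambda_i-\lambda_j=b$ and $j<i$. *)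

(* Defs.v *)
From mathcomp Require Import all_boot all_order all_algebra.
Set Implicit Arguments. Unset Strict Implicit. Unset Printing Implicit Defensive.
Import Order.TTheory GRing.Theory Num.Theory.
Local Open Scope ring_scope.

(* A weight lambda in P = Z^n is a function 'I_n -> int. *)

Definition before (n : nat) (lam : 'I_n -> int) (j i : 'I_n) : bool :=
  (lam i < lam j) || ((lam j == lam i) && (j < i)%N).

Definition pos (n : nat) (lam : 'I_n -> int) (i : 'I_n) : nat :=
  #|[pred j | before lam j i]|.

(* rho(lambda)_i = (n-1)/2 - pos i : the unique permutation of
   ((n-1)/2, (n-3)/2, ..., -(n-1)/2) with rho_i > rho_j iff
   lambda_i > lambda_j or (lambda_i = lambda_j and i < j). *)
Definition rho (n : nat) (lam : 'I_n -> int) (i : 'I_n) : rat :=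
  ((n%:R - 1) / 2) - (pos lam i)%:R.

Definition nbhd (n : nat) (lam : 'I_n -> int) (a b : nat) (i j : 'I_n) : Prop :=
  rho lam i - rho lam j = (a%:R - 1) /\
  (lam i - lam j <= b%:Z - 1 \/ (lam i - lam j = b%:Z /\ (j < i)%N)).

Definition has_nbhd (n : nat) (lam : 'I_n -> int) (a b : nat) : Prop :=
  exists i j : 'I_n, nbhd lam a b i j.

(* Main.v *)
Require Import Defs.
From mathcomp Require Import all_boot all_order all_algebra.
From mathcomp Require Import zify ring.
From Stdlib Require Import Classical.
Import Order.TTheory GRing.Theory Num.Theory.
Set Implicit Arguments. Unset Strict Implicit.
Local Open Scope ring_scope.

Lemma before_irr n (lam : 'I_n -> int) x : ~~ before lam x x.
Proof. by rewrite /before ltxx ltnn andbF. Qed.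

Lemma before_trans n (lam : 'I_n -> int) x y z :
  before lam x y -> before lam y z -> before lam x z.
Proof.
rewrite /before => /orP[h1|/andP[/eqP h1 h1']] /orP[h2|/andP[/eqP h2 h2']];
  apply/orP.
- by left; lia.
- by left; lia.
- by left; lia.
- by right; apply/andP; split; [apply/eqP; lia | lia].
Qed.

Lemma before_total n (lam : 'I_n -> int) x y :
  x != y -> before lam x y || before lam y x.
Proof.
move=> nxy; rewrite /before.
case: (ltgtP (lam x) (lam y)) => h; rewrite ?orbT ?orTb //.
rewrite ?h ?eqxx /=.
have : (nat_of_ord x != nat_of_ord y) by [].
case: (ltngtP x y) => //; by rewrite ?orbT.
Qed.

Lemma pos_lt_before n (lam : 'I_n -> int) x y :
  before lam x y -> (pos lam x < pos lam y)%N.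
Proof.
move=> bxy; rewrite /pos; apply: proper_card; apply/properP; split.
- by apply/subsetP => j; rewrite !inE => h; apply: before_trans h bxy.
- by exists x; rewrite !inE // before_irr.
Qed.

Lemma pos_bound n (lam : 'I_n -> int) x : (pos lam x < n)%N.
Proof.
rewrite /pos -[X in (_ < X)%N]card_ord; apply: proper_card; apply/properP; split.
- by apply/subsetP.
- by exists x; rewrite !inE // before_irr.
Qed.

Lemma pos_inj n (lam : 'I_n -> int) x y : pos lam x = pos lam y -> x = y.
Proof.
move=> e; apply/eqP; apply/negPn/negP => nxy.
case/orP: (before_total lam nxy) => /pos_lt_before; rewrite e ltnn //.
Qed.

Lemma pos_before n (lam : 'I_n -> int) x y :
  (pos lam x < pos lam y)%N -> before lam x y.
Proof.
move=> h; have nxy : x != y by apply/eqP => e; rewrite e ltnn in h.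
case/orP: (before_total lam nxy) => // /pos_lt_before; lia.
Qed.

Lemma pos_surj n (lam : 'I_n -> int) p : (p < n)%N -> exists x, pos lam x = p.
Proof.
move=> hp.
pose f (x : 'I_n) : 'I_n := Ordinal (pos_bound lam x).
have finj : injective f by move=> x y /(congr1 val) /= /pos_inj.
exists (invF finj (Ordinal hp)).
by have := f_invF finj (Ordinal hp) => /(congr1 val).
Qed.

Definition D n (lam : 'I_n -> int) x y (c : int) : Prop :=
  (c < lam x - lam y)%R \/ (lam x - lam y = c /\ (x <= y)%N).

Lemma D_mono n (lam : 'I_n -> int) x y : (pos lam x <= pos lam y)%N -> D lam x y 0.
Proof.
rewrite leq_eqVlt => /orP[/eqP/pos_inj ->|/pos_before].
- by right; split; [rewrite subrr | ].
- rewrite /before /D => /orP[h|/andP[/eqP h h']]; [left|right]; lia.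
Qed.

Lemma D_trans n (lam : 'I_n -> int) x y z c1 c2 c :
  D lam x y c1 -> D lam y z c2 -> (c1 + c2)%R = c -> D lam x z c.
Proof. rewrite /D; lia. Qed.

Lemma rhoE n (lam : 'I_n -> int) i j :
  (rho lam i - rho lam j = (pos lam j)%:R - (pos lam i)%:R)%R.
Proof. rewrite /rho; ring. Qed.

Lemma rho_cond n (lam : 'I_n -> int) a i j : (0 < a)%N ->
  (rho lam i - rho lam j = a%:R - 1)%R <-> pos lam j = (pos lam i + a.-1)%N.
Proof.
case: a => // a _ /=; rewrite rhoE -addn1 natrD addrK.
split.
- move=> /eqP; rewrite subr_eq -natrD eqr_nat => /eqP ->; lia.
- by move=> ->; rewrite natrD addrC addKr.
Qed.

Lemma notG_D n (lam : 'I_n -> int) b a c :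
  ~ (lam a - lam c <= b%:Z - 1 \/ (lam a - lam c = b%:Z /\ (c < a)%N)) ->
  D lam a c b%:Z.
Proof. rewrite /D; lia. Qed.

Lemma G_D n (lam : 'I_n -> int) b a c :
  (lam a - lam c <= b%:Z - 1 \/ (lam a - lam c = b%:Z /\ (c < a)%N)) ->
  D lam a c b%:Z -> False.
Proof. rewrite /D; lia. Qed.

Lemma seg n (lam : 'I_n -> int) k b y : (pos lam y + k < n)%N ->
  (exists c, nbhd lam (k+1) b y c) \/
  (exists c, pos lam c = (pos lam y + k)%N /\ D lam y c b%:Z).
Proof.
move=> h; have [c hc] := pos_surj lam h.
case: (classic (lam y - lam c <= b%:Z - 1 \/ (lam y - lam c = b%:Z /\ (c < y)%N))) => g.
- left; exists c; split => //; apply/rho_cond; first by rewrite addn1.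
  by rewrite hc addn1.
- right; exists c; split => //; exact: notG_D.
Qed.

Lemma chain n (lam : 'I_n -> int) k b m : forall x,
  (pos lam x + m.+1 * (k+1) <= n)%N ->
  (exists a c t, (t <= m)%N /\ pos lam a = (pos lam x + t * (k+1))%N /\
     nbhd lam (k+1) b a c)
  \/ (exists e, pos lam e = (pos lam x + m.+1 * (k+1)).-1 /\
        D lam x e (m.+1 * b)%N%:Z).
Proof.
elim: m => [|m IH] x hx.
- have h : (pos lam x + k < n)%N by lia.
  case: (@seg _ _ _ b _ h) => [[c hc]|[c [hc hd]]].
  + by left; exists x, c, 0%N; rewrite mul0n addn0.
  + right; exists c; split; first by rewrite hc; lia.
    by rewrite mul1n.
- have hx' : (pos lam x + m.+1 * (k+1) <= n)%N by lia.
  case: (IH x hx') => [[a [c [t [ht [ha hn]]]]]|[e [he hd]]].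
  + by left; exists a, c, t; split => //; lia.
  have hy : (pos lam x + m.+1 * (k+1) < n)%N by lia.
  have [y hy'] := pos_surj lam hy.
  have hyk : (pos lam y + k < n)%N by lia.
  case: (@seg _ _ _ b _ hyk) => [[c hc]|[c [hc hd2]]].
  + by left; exists y, c, m.+1; split => //.
  + right; exists c; split; first by rewrite hc hy'; lia.
    apply: (D_trans hd _ (c:=(m.+2 * b)%N%:Z) (c2 := b%:Z)).
    * apply: (D_trans (D_mono (x:=e) (y:=y) _) hd2 (c1 := 0)); first by lia.
      by rewrite add0r.
    * lia.
Qed.

Lemma modk k t1 t2 : (1 <= k)%N -> (t1 * (k+1) <> 1 + t2 * (k+1))%N.
Proof.
move=> hk e; case: (leqP t1 t2) => h.
- have : (t1 * (k+1) <= t2 * (k+1))%N by rewrite leq_mul2r h orbT.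
  lia.
- have : (t2.+1 * (k+1) <= t1 * (k+1))%N by rewrite leq_mul2r h orbT.
  rewrite mulSn; lia.
Qed.

Local Close Scope ring_scope.

Theorem lemma4p3 (n : nat) (lam : 'I_n -> int) (k r m : nat) :
  (1 <= k)%N -> (k <= n - 1)%N -> (2 <= r)%N -> (1 <= m)%N ->
  (has_nbhd lam (m * (k + 1)) (m * (r - 1)) -> has_nbhd lam (k + 1) (r - 1)) /\
  (forall d : nat, (1 <= d)%N ->
     has_nbhd lam (m * (k + 1) + d) (m * (r - 1)) ->
     exists i j i' j' : 'I_n,
       (i, j) <> (i', j') /\ nbhd lam (k + 1) (r - 1) i j /\
       nbhd lam (k + 1) (r - 1) i' j').
Proof.
move=> hk _ _; case: m => // m _; split.
- move=> [i [j [hr hg]]].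
  have := (rho_cond lam i j (a := m.+1 * (k + 1))) => /(_ ltac:(lia)) [/(_ hr) hp _].
  have hj := pos_bound lam j.
  case: (@chain _ lam k (r-1) m i ltac:(lia)) => [[a [c [t [_ [_ hn]]]]]|[e [he hd]]].
  + by exists a, c.
  + have ej : e = j by apply: (@pos_inj _ lam); lia.
    by subst e; case: (G_D hg hd).
- move=> d hd [i [j [hr hg]]].
  have := (rho_cond lam i j (a := m.+1 * (k + 1) + d)) => /(_ ltac:(lia)) [/(_ hr) hp _].
  have hj := pos_bound lam j.
  case: (@chain _ lam k (r-1) m i ltac:(lia)) => [[a1 [c1 [t1 [_ [ha1 hn1]]]]]|[e [he hd2]]]; last first.
    case: (G_D hg); apply: (D_trans hd2 (D_mono (x := e) (y := j) _)); first by lia.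
    by rewrite GRing.addr0.
  have hi1 : (pos lam i + 1 < n)%N by lia.
  have [i1 hi1'] := pos_surj lam hi1.
  case: (@chain _ lam k (r-1) m i1 ltac:(lia)) => [[a2 [c2 [t2 [_ [ha2 hn2]]]]]|[e [he hd2]]]; last first.
    case: (G_D hg); apply: (D_trans (D_mono (x := i) (y := i1) _)); first by lia.
    - apply: (D_trans hd2 (D_mono (x := e) (y := j) _)); first by lia.
      by rewrite GRing.addr0.
    - by rewrite GRing.add0r.
  exists a1, c1, a2, c2; split => //.
  case=> ea _; subst a2; move: ha2; rewrite ha1 hi1' -addnA => /addnI.
  exact: modk.
Qed.
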